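(* In the setting below, the Jacobian matrix $L=\left(\frac{\partial B_i}{\partial w_j}\right)_{i,j=1}^n$ of $(B_1,\dots,B_n)$ with respect to $(w_1,\dots,w_n)$ is, at every point of $W$, symmetric, strictly diagonally dominant (i.e. $|\partial B_i/\partial w_i|>\sum_{j\ne i}|\partial B_i/\partial w_j|$ for each $i$), and negative definite.
   Context: Setting: $T^*$ is a triangulation of a closed surface $S$ with vertex set $T^0$; $\Sigma=S\setminus N(T^0)$ where $N(T^0)$ is a small open regular disjoint neighborhood of $T^0$; $\Sigma$ has boundary components labeled $1,\dots,n$. $T=T^*\cap\Sigma$ is the ideal triangulation with ideal edges $E$ and ideal faces $F$; $ij$ denotes the ideal edge between boundary components $i,j$ and $ijk$ the ideal face adjacent to boundary components $i,j,k$. For each face $ijk$ and positive lengths $l_{ij},l_{jk},l_{ki}$ there is a right-angled hyperbolic hexagon, unique up to isometry, with pairwise non-adjacent sides of these lengths; $\theta_i^f$ is the length of the side of the hexagon of $f=ijk$ opposite to the side of length $l_{jk}$, i.e. $\cosh\theta_i^f=\frac{\cosh l_{jk}+\cosh l_{ki}\cosh l_{ij}}{\sinh l_{ki}\sinh l_{ij}}$. Fix $l^0\in\mathbb{R}_+^{|E|}$. $W=\{w\in\mathbb{R}^n: w_i+w_j>-\ln\cosh\frac{l^0_{ij}}{2}\ \forall ij\in E\}$; for $w\in W$, $l=w*l^0$ is given by $\cosh\frac{l_{ij}}{2}=e^{w_i+w_j}\cosh\frac{l^0_{ij}}{2}$, and $B_i(w)=\sum_{f\in F_i}\theta_i^f$,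 where $F_i$ is the set of faces adjacent to boundary component $i$ ($B_i$ is the length of boundary component $i$ of the glued hyperbolic surface). *)

(* Defs.v *)
From mathcomp Require Import all_boot.
From Stdlib Require Import Reals.
From Coquelicot Require Import Coquelicot.

Set Implicit Arguments.
Unset Strict Implicit.
Unset Printing Implicit Defensive.

Definition arcosh (y : R) : R := ln (y + sqrt (y * y - 1)).

(* Combinatorial (ideal) triangulation of a closed surface with n vertices
   (= n boundary components of Sigma).  Faces are triangles with corners
   labelled 0,1,2; [corner f k] is the vertex (boundary component) at corner
   k of face f, and [side f k] is the edge of f opposite to corner k.
   Each edge e has endpoints [ends1 e], [ends2 e] (loops allowed). *)
Record triangulation (n : nat) := Triangulation {
  face : finType;
  edge : finType;
  corner : face -> 'I_3 -> 'I_n;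
  side : face -> 'I_3 -> edge;
  ends1 : edge -> 'I_n;
  ends2 : edge -> 'I_n;
  side_ends : forall f k,
    (ends1 (side f k), ends2 (side f k)) = (corner f (ordS k), corner f (ordS (ordS k)))
    \/ (ends1 (side f k), ends2 (side f k)) = (corner f (ordS (ordS k)), corner f (ordS k));
  (* closed surface: every edge is a side of exactly two face-sides *)
  edge_two_sides : forall e, #|[set p : face * 'I_3 | side p.1 p.2 == e]| = 2%nat;
  vertex_used : forall i : 'I_n, exists f k, corner f k = i
}.

Open Scope R_scope.

Section Geometry.
Variables (n : nat) (T : triangulation n).

Definition inW (l0 : edge T -> R) (w : 'I_n -> R) : Prop :=
  forall e : edge T, w (ends1 e) + w (ends2 e) > - ln (cosh (l0 e / 2)).

Definition edge_length (l0 : edge T -> R) (w : 'I_n -> R) (e : edge T) : R :=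
  2 * arcosh (exp (w (ends1 e) + w (ends2 e)) * cosh (l0 e / 2)).

(* hexagon side length opposite the side of length a, the two other
   pairwise non-adjacent sides having lengths b, c *)
Definition hex_theta (a b c : R) : R :=
  arcosh ((cosh a + cosh b * cosh c) / (sinh b * sinh c)).

Definition theta (l0 : edge T -> R) (w : 'I_n -> R) (f : face T) (k : 'I_3) : R :=
  let l := edge_length l0 w in
  hex_theta (l (side f k)) (l (side f (ordS k))) (l (side f (ordS (ordS k)))).

(* B_i(w) : length of boundary component i = sum of theta over the corners of
   faces at vertex i *)
Definition Bfun (l0 : edge T -> R) (w : 'I_n -> R) (i : 'I_n) : R :=
  \big[Rplus/0]_(f : face T) \big[Rplus/0]_(k : 'I_3 | corner f k == i) theta l0 w f k.

End Geometry.

Definition upd (n : nat) (w : 'I_n -> R) (j : 'I_n) (t : R) : 'I_n -> R :=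
  fun i => if i == j then t else w i.

Definition jacB (n : nat) (T : triangulation n) (l0 : edge T -> R)
    (w : 'I_n -> R) (i j : 'I_n) : R :=
  Derive (fun t => Bfun l0 (upd w j t) i) (w j).

(* Main.v *)
From HB Require Import structures.
Require Import Defs.
From mathcomp Require Import all_boot.
From Stdlib Require Import Reals Lra Psatz.
From Coquelicot Require Import Coquelicot.
Open Scope R_scope.

Lemma arcosh_derive y : 1 < y -> is_derive arcosh y (/ sqrt (y*y-1)).
Proof.
move=> Hy.
have Hp : 0 < y*y-1 by nra.
have HS := sqrt_lt_R0 _ Hp.
unfold arcosh.
evar (d : R).
have H : is_derive (fun x => ln (x + sqrt (x*x-1))) y d.
  apply: (is_derive_comp ln (fun x => x + sqrt (x*x-1))).
  apply: is_derive_ln. lra.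
  apply: (is_derive_plus (fun x => x) (fun x => sqrt (x*x-1))).
  apply: is_derive_id.
  apply: (is_derive_sqrt (fun x => x*x-1)); last lra.
  auto_derive; first done. reflexivity.
rewrite /d in H.
set S := sqrt (y*y-1) in H HS *.
have -> : / S = (scal (plus one ((1 * y + y * 1) / (2 * S))) (/ (y + S))).
  rewrite /scal /= /mult /= /plus /= /one /=.
  field. split; lra.
exact H.
Qed.

Lemma is_derive_cosh_c (f : R -> R) t d : is_derive f t d ->
  is_derive (fun t => cosh (f t)) t (sinh (f t) * d).
Proof.
move=> H.
have H1 : is_derive cosh (f t) (sinh (f t)) by apply/is_derive_Reals; apply: derivable_pt_lim_cosh.
have := is_derive_comp cosh f t _ _ H1 H.
by rewrite /scal /= /mult /= Rmult_comm.
Qed.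

Lemma is_derive_sinh_c (f : R -> R) t d : is_derive f t d ->
  is_derive (fun t => sinh (f t)) t (cosh (f t) * d).
Proof.
move=> H.
have H1 : is_derive sinh (f t) (cosh (f t)) by apply/is_derive_Reals; apply: derivable_pt_lim_sinh.
have := is_derive_comp sinh f t _ _ H1 H.
by rewrite /scal /= /mult /= Rmult_comm.
Qed.

Lemma len_derive (E : R -> R) g t : is_derive E t (g * E t) -> 1 < E t ->
  is_derive (fun t => 2 * arcosh (E t)) t (2 * (g * E t / sqrt (E t * E t - 1))).
Proof.
move=> HE H1.
apply: is_derive_scal.
have := is_derive_comp arcosh E t _ _ (arcosh_derive _ H1) HE.
by rewrite /scal /= /mult /=.
Qed.

Definition Qf (a b c : R) := (cosh a + cosh b * cosh c) / (sinh b * sinh c).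

Lemma hex_derive (la lb lc : R -> R) da db dc t :
  is_derive la t da -> is_derive lb t db -> is_derive lc t dc ->
  sinh (lb t) * sinh (lc t) <> 0 -> 1 < Qf (la t) (lb t) (lc t) ->
  is_derive (fun t => hex_theta (la t) (lb t) (lc t)) t
   (((sinh (la t) * da + (sinh (lb t) * db * cosh (lc t) + cosh (lb t) * (sinh (lc t) * dc)))
      * (sinh (lb t) * sinh (lc t))
     - (cosh (la t) + cosh (lb t) * cosh (lc t))
       * (cosh (lb t) * db * sinh (lc t) + sinh (lb t) * (cosh (lc t) * dc)))
     / (sinh (lb t) * sinh (lc t)) ^ 2
     / sqrt (Qf (la t) (lb t) (lc t) * Qf (la t) (lb t) (lc t) - 1)).
Proof.
move=> Ha Hb Hc Hd HQ.
have HQd : is_derive (fun t => Qf (la t) (lb t) (lc t)) t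
   (((sinh (la t) * da + (sinh (lb t) * db * cosh (lc t) + cosh (lb t) * (sinh (lc t) * dc)))
      * (sinh (lb t) * sinh (lc t))
     - (cosh (la t) + cosh (lb t) * cosh (lc t))
       * (cosh (lb t) * db * sinh (lc t) + sinh (lb t) * (cosh (lc t) * dc)))
     / (sinh (lb t) * sinh (lc t)) ^ 2).
  rewrite /Qf.
  apply: (is_derive_div (fun t => cosh (la t) + cosh (lb t) * cosh (lc t))
                        (fun t => sinh (lb t) * sinh (lc t))); last exact Hd.
  - apply: (is_derive_plus (fun t => cosh (la t)) (fun t => cosh (lb t) * cosh (lc t))).
      exact: is_derive_cosh_c.
    have := is_derive_mult (fun t => cosh (lb t)) (fun t => cosh (lc t)) t _ _
      (is_derive_cosh_c _ _ _ Hb) (is_derive_cosh_c _ _ _ Hc).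
    rewrite /mult /plus /=. move=> H; apply: H. move=> *; apply: Rmult_comm.
  - have := is_derive_mult (fun t => sinh (lb t)) (fun t => sinh (lc t)) t _ _
      (is_derive_sinh_c _ _ _ Hb) (is_derive_sinh_c _ _ _ Hc).
    rewrite /mult /plus /=. move=> H. 
    have H' := H Rmult_comm. move: H'. by apply: is_derive_ext.
have := is_derive_comp arcosh (fun t => Qf (la t) (lb t) (lc t)) t _ _ (arcosh_derive _ HQ) HQd.
rewrite /scal /= /mult /=. rewrite /hex_theta. move=> H. 
apply: is_derive_ext H. by [].
Qed.

Definition X (e : R) := 2*e*e - 1.
Definition Dl (xa xb xc : R) := xa*xa + xb*xb + xc*xc + 2*xa*xb*xc - 1.
Definition G0 (xa xb xc : R) := 2*(xa+1) / sqrt (Dl xa xb xc).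
Definition G1 (xa xb xc : R) := -2*(xc + xa*xb) / ((xb-1) * sqrt (Dl xa xb xc)).
Definition G2 (xa xb xc : R) := -2*(xb + xa*xc) / ((xc-1) * sqrt (Dl xa xb xc)).

Lemma cosh_sinh_1 a : cosh a * cosh a - sinh a * sinh a = 1.
Proof.
rewrite /cosh /sinh exp_Ropp.
have := exp_pos a. move=> H. field. lra.
Qed.

Lemma QQ a b c : sinh b * sinh c <> 0 ->
  Qf a b c * Qf a b c - 1 = Dl (cosh a) (cosh b) (cosh c) / (sinh b * sinh c)^2.
Proof.
move=> H.
have Hb := cosh_sinh_1 b. have Hc := cosh_sinh_1 c.
have Hnum : (cosh a + cosh b * cosh c)^2 - (sinh b * sinh c)^2 = Dl (cosh a) (cosh b) (cosh c).
  have -> : (sinh b * sinh c)^2 = (sinh b * sinh b) * (sinh c * sinh c) by ring.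
  have -> : sinh b * sinh b = cosh b * cosh b - 1 by lra.
  have -> : sinh c * sinh c = cosh c * cosh c - 1 by lra.
  rewrite /Dl. ring.
rewrite -Hnum /Qf. field. split=> Hx; apply: H; rewrite Hx; ring.
Qed.

Lemma Dl_pos xa xb xc : 1 < xa -> 1 < xb -> 1 < xc -> 0 < Dl xa xb xc.
Proof.
move=> Ha Hb Hc; rewrite /Dl.
have H1 : 1 < xb * xc by nra.
have H2 : 1 < xa * (xb * xc) by nra.
nra.
Qed.

Lemma zlem E : 1 < E -> let z := E + sqrt (E*E-1) in
  1 < z /\ E = (z + /z)/2 /\ sqrt (E*E-1) = (z - /z)/2.
Proof.
move=> H z.
have Hp : 0 < E*E-1 by nra.
have HS := sqrt_lt_R0 _ Hp.
have HSS := sqrt_sqrt _ (Rlt_le _ _ Hp).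
have Hz : 1 < z by rewrite /z; lra.
have Hiz : / z = E - sqrt (E*E-1).
  have Hm : z * (E - sqrt (E*E-1)) = 1 by rewrite /z; nra.
  apply: (Rmult_eq_reg_l z); last lra.
  rewrite Hm Rinv_r //; lra.
split; first done.
rewrite Hiz /z. split; field.
Qed.

Lemma zlem' E : 1 < E -> exists z,
  1 < z /\ sqrt (E*E-1) = (z - /z)/2 /\ E = (z + /z)/2.
Proof. move=> H. have [A [B C]] := zlem E H. by exists (E + sqrt (E*E-1)). Qed.

Lemma arcosh_z E : 1 < E -> arcosh E = ln (E + sqrt (E*E-1)).
Proof. by []. Qed.

Lemma cosh2 E : 1 < E -> cosh (2 * arcosh E) = X E.
Proof.
move=> H. have [Hz [HE HS]] := zlem E H.
rewrite arcosh_z //. move: Hz HE HS. set z := E + sqrt (E*E-1). move=> Hz HE HS.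
rewrite /cosh exp_Ropp.
have -> : exp (2 * ln z) = z * z.
  have -> : 2 * ln z = ln z + ln z by ring.
  rewrite exp_plus exp_ln //; lra.
rewrite /X HE. field. lra.
Qed.

Lemma sinh2 E : 1 < E -> sinh (2 * arcosh E) = 2 * E * sqrt (E*E-1).
Proof.
move=> H. have [Hz [HE HS]] := zlem E H.
rewrite arcosh_z //. move: Hz HE HS. set z := E + sqrt (E*E-1). move=> Hz HE HS.
rewrite /sinh exp_Ropp.
have -> : exp (2 * ln z) = z * z.
  have -> : 2 * ln z = ln z + ln z by ring.
  rewrite exp_plus exp_ln //; lra.
rewrite HS HE. field. lra.
Qed.

Lemma is_derive_eq (f : R -> R) (x l l' : R) : is_derive f x l -> @eq R l l' -> is_derive f x l'.
Proof. by move=> H <-. Qed.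

Lemma sqrtQQ a b c : 0 < sinh b -> 0 < sinh c ->
  sqrt (Qf a b c * Qf a b c - 1) = sqrt (Dl (cosh a) (cosh b) (cosh c)) / (sinh b * sinh c).
Proof.
move=> Hb Hc.
have Hp : 0 < sinh b * sinh c by nra.
rewrite QQ; last lra.
rewrite sqrt_div_alt; last nra.
rewrite sqrt_pow2 //; lra.
Qed.

Lemma sinh2_pos E : 1 < E -> 0 < sinh (2 * arcosh E).
Proof.
move=> H. rewrite sinh2 //.
have Hp : 0 < E*E-1 by nra.
have := sqrt_lt_R0 _ Hp. nra.
Qed.

Lemma core (Ea Eb Ec : R -> R) ga gb gc t :
  is_derive Ea t (ga * Ea t) -> is_derive Eb t (gb * Eb t) -> is_derive Ec t (gc * Ec t) ->
  1 < Ea t -> 1 < Eb t -> 1 < Ec t ->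
  is_derive (fun t => hex_theta (2*arcosh (Ea t)) (2*arcosh (Eb t)) (2*arcosh (Ec t))) t
    (ga * G0 (X (Ea t)) (X (Eb t)) (X (Ec t)) + gb * G1 (X (Ea t)) (X (Eb t)) (X (Ec t))
     + gc * G2 (X (Ea t)) (X (Eb t)) (X (Ec t))).
Proof.
move=> HEa HEb HEc Ha Hb Hc.
have La := len_derive _ _ _ HEa Ha.
have Lb := len_derive _ _ _ HEb Hb.
have Lc := len_derive _ _ _ HEc Hc.
have Hsb := sinh2_pos _ Hb. have Hsc := sinh2_pos _ Hc.
have Hd : sinh (2 * arcosh (Eb t)) * sinh (2 * arcosh (Ec t)) <> 0 by nra.
have Xa : 1 < X (Ea t) by rewrite /X; nra.
have Xb : 1 < X (Eb t) by rewrite /X; nra.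
have Xc : 1 < X (Ec t) by rewrite /X; nra.
have HDl := Dl_pos _ _ _ Xa Xb Xc.
have HQ : 1 < Qf (2 * arcosh (Ea t)) (2 * arcosh (Eb t)) (2 * arcosh (Ec t)).
  have H1 := QQ (2 * arcosh (Ea t)) _ _ Hd.
  rewrite !cosh2 // in H1.
  have H2 : 0 < Dl (X (Ea t)) (X (Eb t)) (X (Ec t)) / (sinh (2 * arcosh (Eb t)) * sinh (2 * arcosh (Ec t))) ^ 2.
    apply: Rdiv_lt_0_compat => //. nra.
  have H3 : 0 < Qf (2 * arcosh (Ea t)) (2 * arcosh (Eb t)) (2 * arcosh (Ec t)).
    rewrite /Qf !cosh2 //. apply: Rdiv_lt_0_compat; nra.
  nra.
have H := hex_derive _ _ _ _ _ _ t La Lb Lc Hd HQ.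
refine (is_derive_eq _ _ _ _ H _). cbv beta.
rewrite sqrtQQ //.
rewrite !cosh2 // !sinh2 //.
have := sqrt_lt_R0 _ HDl.
rewrite /G0 /G1 /G2.
move: (sqrt (Dl (X (Ea t)) (X (Eb t)) (X (Ec t)))) => sD HsD.
have [za [Hza [HSa HEa']]] := zlem' _ Ha.
have [zb [Hzb [HSb HEb']]] := zlem' _ Hb.
have [zc [Hzc [HSc HEc']]] := zlem' _ Hc.
rewrite HSa HSb HSc.
rewrite /X in Xa Xb Xc *.
rewrite HEa' HEb' HEc' in Xa Xb Xc *.
clear H La Lb Lc HQ Hd Hsb Hsc HDl HEa HEb HEc.
have Ha2 : 0 < za * za - 1 by nra.
have Hb2 : 0 < zb * zb - 1 by nra.
have Hc2 : 0 < zc * zc - 1 by nra.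
field.
have Hb4 : 0 < (zb*zb-1)*(zb*zb-1) by nra.
have Hc4 : 0 < (zc*zc-1)*(zc*zc-1) by nra.
repeat split; nra.
Qed.
Lemma Rplus_assoc' : associative Rplus. Proof. move=> *; by rewrite Rplus_assoc. Qed.
HB.instance Definition _ := Monoid.isComLaw.Build R 0 Rplus Rplus_assoc' Rplus_comm Rplus_0_l.

Definition o0 : 'I_3 := @Ordinal 3 0 isT.
Definition o1 : 'I_3 := @Ordinal 3 1 isT.
Definition o2 : 'I_3 := @Ordinal 3 2 isT.

Lemma sum3 (F : 'I_3 -> R) : \big[Rplus/0]_(i : 'I_3) F i = F o0 + (F o1 + F o2).
Proof.
rewrite !big_ord_recl big_ord0 Rplus_0_r.
congr (F _ + (F _ + F _)); exact: val_inj.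
Qed.

Lemma ordS0 : ordS o0 = o1. Proof. exact: val_inj. Qed.
Lemma ordS1 : ordS o1 = o2. Proof. exact: val_inj. Qed.
Lemma ordS2 : ordS o2 = o0. Proof. exact: val_inj. Qed.

Lemma ord3P (P : 'I_3 -> Prop) : P o0 -> P o1 -> P o2 -> forall a, P a.
Proof.
move=> H0 H1 H2 [[|[|[|m]]] Hm].
- by have -> : Ordinal Hm = o0 by exact: val_inj.
- by have -> : Ordinal Hm = o1 by exact: val_inj.
- by have -> : Ordinal Hm = o2 by exact: val_inj.
- by [].
Qed.

Lemma sum3c (P : pred 'I_3) (F : 'I_3 -> R) : \big[Rplus/0]_(i | P i) F i =
  (if P o0 then F o0 else 0) + ((if P o1 then F o1 else 0) + (if P o2 then F o2 else 0)).
Proof. by rewrite big_mkcond sum3. Qed.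


Definition ind (b : bool) : R := if b then 1 else 0.
Definition Eed {n : nat} {T : triangulation n} (l0 : edge T -> R) (w : 'I_n -> R) (e : edge T) :=
  exp (w (ends1 e) + w (ends2 e)) * cosh (l0 e / 2).
Definition xs {n : nat} {T : triangulation n} (l0 : edge T -> R) (w : 'I_n -> R) (f : face T) (m : 'I_3) :=
  X (Eed l0 w (side f m)).
Definition Gm (x : 'I_3 -> R) (a m : 'I_3) : R :=
  if m == a then G0 (x a) (x (ordS a)) (x (ordS (ordS a)))
  else if m == ordS a then G1 (x a) (x (ordS a)) (x (ordS (ordS a)))
  else G2 (x a) (x (ordS a)) (x (ordS (ordS a))).
Definition Mm (x : 'I_3 -> R) (a b : 'I_3) : R := \big[Rplus/0]_(m | m != b) Gm x a m.

Lemma upd_derive {n} (w : 'I_n -> R) j t i : is_derive (fun t => upd w j t i) t (ind (i == j)).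
Proof.
rewrite /upd /ind. case: (i == j).
- exact: is_derive_id.
- exact: is_derive_const.
Qed.

Lemma upd_same {n} (w : 'I_n -> R) j i : upd w j (w j) i = w i.
Proof. rewrite /upd. by case: eqP => [->|]. Qed.

Lemma Eed_derive n (T : triangulation n) (l0 : edge T -> R) w j t e :
  is_derive (fun t => Eed l0 (upd w j t) e) t
    ((ind (ends1 e == j) + ind (ends2 e == j)) * Eed l0 (upd w j t) e).
Proof.
rewrite /Eed.
have H1 := is_derive_plus _ _ t _ _ (upd_derive w j t (ends1 e)) (upd_derive w j t (ends2 e)).
have H2 := is_derive_comp exp _ t _ _ (is_derive_exp _) H1.
have H3 := is_derive_mult _ (fun _ => cosh (l0 e / 2)) t _ _ H2 (is_derive_const _ _) Rmult_comm.
refine (is_derive_eq _ _ _ _ H3 _).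
rewrite /scal /plus /mult /zero /= /mult /=. ring.
Qed.

Lemma Eed_gt1 n (T : triangulation n) (l0 : edge T -> R) w e : inW l0 w -> 1 < Eed l0 w e.
Proof.
move=> Hw. have He := Hw e. rewrite /Eed.
have Hc : 0 < cosh (l0 e / 2) by rewrite /cosh; have := exp_pos (l0 e / 2); have := exp_pos (- (l0 e / 2)); lra.
have := exp_increasing _ _ He. rewrite exp_Ropp exp_ln //.
move=> H. 
have := Rmult_lt_compat_r _ _ _ Hc H. rewrite Rinv_l; lra.
Qed.

Lemma comb (beta H : 'I_3 -> R) k :
  (beta (ordS k) + beta (ordS (ordS k))) * H k
  + (beta (ordS (ordS k)) + beta (ordS (ordS (ordS k)))) * H (ordS k)
  + (beta (ordS (ordS (ordS k))) + beta (ordS (ordS (ordS (ordS k))))) * H (ordS (ordS k))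
  = \big[Rplus/0]_(b : 'I_3) (beta b * \big[Rplus/0]_(m | m != b) H m).
Proof.
move: k; apply: ord3P; do 4 rewrite ?ordS0 ?ordS1 ?ordS2; rewrite sum3 !sum3c /=; ring.
Qed.

Lemma gamma_side n (T : triangulation n) (f : face T) m j :
  ind (ends1 (side f m) == j) + ind (ends2 (side f m) == j)
  = ind (corner f (ordS m) == j) + ind (corner f (ordS (ordS m)) == j).
Proof.
case: (side_ends f m) => [[-> ->]|[-> ->]] //. ring.
Qed.

Lemma Gm_k (x : 'I_3 -> R) (k : 'I_3) : Gm x k k = G0 (x k) (x (ordS k)) (x (ordS (ordS k))).
Proof. by rewrite /Gm eqxx. Qed.
Lemma Gm_k1 (x : 'I_3 -> R) (k : 'I_3) : Gm x k (ordS k) = G1 (x k) (x (ordS k)) (x (ordS (ordS k))).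
Proof. move: k; apply: ord3P; by do 3 rewrite /Gm ?ordS0 ?ordS1 ?ordS2. Qed.
Lemma Gm_k2 (x : 'I_3 -> R) (k : 'I_3) : Gm x k (ordS (ordS k)) = G2 (x k) (x (ordS k)) (x (ordS (ordS k))).
Proof. move: k; apply: ord3P; by do 3 rewrite /Gm ?ordS0 ?ordS1 ?ordS2. Qed.
Lemma ordS3 (k : 'I_3) : ordS (ordS (ordS k)) = k.
Proof. move: k; apply: ord3P; by do 3 rewrite ?ordS0 ?ordS1 ?ordS2. Qed.

Lemma theta_derive n (T : triangulation n) (l0 : edge T -> R) w j f k : inW l0 w ->
  is_derive (fun t => theta l0 (upd w j t) f k) (w j)
   (\big[Rplus/0]_(b : 'I_3) (ind (corner f b == j) * Mm (xs l0 w f) k b)).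
Proof.
move=> Hw.
have Hs : forall e, Eed l0 (upd w j (w j)) e = Eed l0 w e.
  move=> e; by rewrite /Eed !upd_same.
have Hg : forall e, 1 < Eed l0 (upd w j (w j)) e by move=> e; rewrite Hs; apply: Eed_gt1.
have H := core _ _ _ _ _ _ (w j) (Eed_derive _ _ l0 w j (w j) (side f k))
   (Eed_derive _ _ l0 w j (w j) (side f (ordS k))) (Eed_derive _ _ l0 w j (w j) (side f (ordS (ordS k))))
   (Hg _) (Hg _) (Hg _).
refine (is_derive_eq _ _ _ _ H _).
rewrite !Hs !gamma_side /Mm.
rewrite -(comb (fun b => ind (corner f b == j)) (Gm (xs l0 w f) k) k).
rewrite !ordS3 Gm_k Gm_k1 Gm_k2 /xs. ring.
Qed.

Lemma is_derive_big (I : Type) (r : seq I) (P : pred I) (F : I -> R -> R) (dF : I -> R) t :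
  (forall i, P i -> is_derive (F i) t (dF i)) ->
  is_derive (fun t => \big[Rplus/0]_(i <- r | P i) F i t) t (\big[Rplus/0]_(i <- r | P i) dF i).
Proof.
move=> H. elim: r => [|a r IH].
- rewrite big_nil. apply: (is_derive_ext (fun _ => 0)); first by move=> s; rewrite big_nil.
  exact: is_derive_const.
- rewrite big_cons. case Pa: (P a).
  + apply: (is_derive_ext (fun s => F a s + \big[Rplus/0]_(i <- r | P i) F i s)).
      by move=> s; rewrite big_cons Pa.
    exact: (is_derive_plus (F a) (fun s => \big[Rplus/0]_(i <- r | P i) F i s) t _ _ (H a Pa) IH).
  + apply: (is_derive_ext (fun s => \big[Rplus/0]_(i <- r | P i) F i s)) => //.
    by move=> s; rewrite big_cons Pa.
Qed.

Definition Dm {n : nat} {T : triangulation n} (l0 : edge T -> R) (w : 'I_n -> R) (i j : 'I_n) : R :=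
  \big[Rplus/0]_(f : face T) \big[Rplus/0]_(a : 'I_3 | corner f a == i)
     \big[Rplus/0]_(b : 'I_3 | corner f b == j) Mm (xs l0 w f) a b.

Lemma B_derive n (T : triangulation n) (l0 : edge T -> R) w i j : inW l0 w ->
  is_derive (fun t => Bfun l0 (upd w j t) i) (w j) (Dm l0 w i j).
Proof.
move=> Hw. rewrite /Bfun /Dm.
refine (is_derive_big _ _ _ (fun f t => \big[Rplus/0]_(k : 'I_3 | corner f k == i) theta l0 (upd w j t) f k) _ _ _) => f _.
refine (is_derive_big _ _ _ (fun k t => theta l0 (upd w j t) f k) _ _ _) => k _.
refine (is_derive_eq _ _ _ _ (theta_derive _ _ l0 w j f k Hw) _).
rewrite [RHS]big_mkcond. apply: eq_bigr => b _. rewrite /ind. case: (corner f b == j); ring.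
Qed.

Lemma sum_ne (F : 'I_3 -> R) a :
  \big[Rplus/0]_(b | b != a) F b = F (ordS a) + F (ordS (ordS a)).
Proof. move: a; apply: ord3P; do 3 rewrite ?ordS0 ?ordS1 ?ordS2; rewrite sum3c /=; ring. Qed.

Lemma Mm_aa x a : Mm x a a = G1 (x a) (x (ordS a)) (x (ordS (ordS a))) + G2 (x a) (x (ordS a)) (x (ordS (ordS a))).
Proof. rewrite /Mm sum_ne Gm_k1 Gm_k2. done. Qed.

Lemma Mm_ab x a : Mm x a (ordS a) = G0 (x a) (x (ordS a)) (x (ordS (ordS a))) + G2 (x a) (x (ordS a)) (x (ordS (ordS a))).
Proof.
have -> : Mm x a (ordS a) = Gm x a (ordS (ordS a)) + Gm x a a.
  rewrite /Mm sum_ne ordS3. ring.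
rewrite Gm_k Gm_k2. ring.
Qed.

Lemma Mm_ac x a : Mm x a (ordS (ordS a)) = G0 (x a) (x (ordS a)) (x (ordS (ordS a))) + G1 (x a) (x (ordS a)) (x (ordS (ordS a))).
Proof.
have -> : Mm x a (ordS (ordS a)) = Gm x a a + Gm x a (ordS a).
  rewrite /Mm sum_ne !ordS3. done.
rewrite Gm_k Gm_k1. ring.
Qed.

Lemma Dl_rot a b c : Dl b c a = Dl a b c.
Proof. rewrite /Dl; ring. Qed.

Lemma sym_alg xa xb xc : 1 < xa -> 1 < xb -> 1 < xc ->
  G0 xa xb xc + G2 xa xb xc = G0 xb xc xa + G1 xb xc xa.
Proof.
move=> Ha Hb Hc. rewrite /G0 /G1 /G2 (Dl_rot xa xb xc).
have := sqrt_lt_R0 _ (Dl_pos _ _ _ Ha Hb Hc). move=> Hs.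
field. split; lra.
Qed.

Lemma sym_case x a : (forall m, 1 < x m) -> Mm x a (ordS a) = Mm x (ordS a) a.
Proof.
move=> Hx.
rewrite Mm_ab.
have -> : Mm x (ordS a) a = Mm x (ordS a) (ordS (ordS (ordS a))) by rewrite ordS3.
rewrite Mm_ac ordS3. exact: sym_alg.
Qed.

Lemma Mm_sym x a b : (forall m, 1 < x m) -> Mm x a b = Mm x b a.
Proof.
move=> Hx.
have S0 := sym_case x o0 Hx. have S1 := sym_case x o1 Hx. have S2 := sym_case x o2 Hx.
rewrite ordS0 in S0. rewrite ordS1 in S1. rewrite ordS2 in S2.
move: a b; apply: ord3P; apply: ord3P; by [].
Qed.

Lemma dom_alg xa xb xc : 1 < xa -> 1 < xb -> 1 < xc ->
  G1 xa xb xc + G2 xa xb xc + (Rabs (G0 xa xb xc + G2 xa xb xc) + Rabs (G0 xa xb xc + G1 xa xb xc)) < 0.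
Proof.
move=> Ha Hb Hc. rewrite /G0 /G1 /G2.
have := sqrt_lt_R0 _ (Dl_pos _ _ _ Ha Hb Hc).
move: (sqrt (Dl xa xb xc)) => s Hs.
have Kb : 0 < 2 / ((xb - 1) * s) by apply: Rdiv_lt_0_compat; nra.
have Kc : 0 < 2 / ((xc - 1) * s) by apply: Rdiv_lt_0_compat; nra.
have E1 : -2 * (xc + xa * xb) / ((xb - 1) * s) = - (2 / ((xb - 1) * s)) * (xc + xa * xb) by field; lra.
have E2 : -2 * (xb + xa * xc) / ((xc - 1) * s) = - (2 / ((xc - 1) * s)) * (xb + xa * xc) by field; lra.
have E3 : 2 * (xa + 1) / s + - (2 / ((xc - 1) * s)) * (xb + xa * xc) = (2 / ((xc - 1) * s)) * (xc - xa - xb - 1) by field; lra.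
have E4 : 2 * (xa + 1) / s + - (2 / ((xb - 1) * s)) * (xc + xa * xb) = (2 / ((xb - 1) * s)) * (xb - xa - xc - 1) by field; lra.
rewrite E1 E2 E3 E4.
move: Kb Kc E1 E2 E3 E4. 
move: (2 / ((xb - 1) * s)) (2 / ((xc - 1) * s)) => kb kc Kb Kc _ _ _ _.
rewrite !Rabs_mult (Rabs_pos_eq kb) ?(Rabs_pos_eq kc); try lra.
have A1 : Rabs (xc - xa - xb - 1) < xb + xa * xc by apply: Rabs_def1; nra.
have A2 : Rabs (xb - xa - xc - 1) < xc + xa * xb by apply: Rabs_def1; nra.
have := Rmult_lt_compat_l _ _ _ Kc A1. have := Rmult_lt_compat_l _ _ _ Kb A2.
lra.
Qed.

Lemma Mm_dom x a : (forall m, 1 < x m) ->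
  Mm x a a + \big[Rplus/0]_(b | b != a) Rabs (Mm x a b) < 0.
Proof.
move=> Hx. rewrite sum_ne Mm_aa Mm_ab Mm_ac. exact: dom_alg.
Qed.

Section Sums.
Variable (I : Type).
Implicit Types (r : seq I) (P : pred I) (F G : I -> R).

Lemma sum_le r P F G : (forall i, P i -> F i <= G i) ->
  \big[Rplus/0]_(i <- r | P i) F i <= \big[Rplus/0]_(i <- r | P i) G i.
Proof.
move=> H. elim: r => [|a r IH]; first by rewrite !big_nil; lra.
rewrite !big_cons. case Pa: (P a) => //. have := H a Pa. lra.
Qed.

Lemma sum_abs_le r P F :
  Rabs (\big[Rplus/0]_(i <- r | P i) F i) <= \big[Rplus/0]_(i <- r | P i) Rabs (F i).
Proof.
elim: r => [|a r IH]; first by rewrite !big_nil Rabs_R0; lra.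
rewrite !big_cons. case Pa: (P a) => //.
have := Rabs_triang (F a) (\big[Rplus/0]_(i <- r | P i) F i). lra.
Qed.

Lemma sum_nonpos r P F : (forall i, P i -> F i <= 0) -> \big[Rplus/0]_(i <- r | P i) F i <= 0.
Proof.
move=> H. have := sum_le r P F (fun _ => 0) H.
rewrite big1_eq. done.
Qed.

Lemma sum_nonneg r P F : (forall i, P i -> 0 <= F i) -> 0 <= \big[Rplus/0]_(i <- r | P i) F i.
Proof.
move=> H. have := sum_le r P (fun _ => 0) F H.
rewrite big1_eq. done.
Qed.
End Sums.

Lemma sum_neg (I : finType) (P : pred I) (F : I -> R) k0 :
  (forall i, P i -> F i <= 0) -> P k0 -> F k0 < 0 -> \big[Rplus/0]_(i | P i) F i < 0.
Proof.
move=> H Pk Fk. rewrite (bigD1 k0) //=.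
have : \big[Rplus/0]_(i | P i && (i != k0)) F i <= 0.
  apply: sum_nonpos => i /andP [Pi _]. exact: H.
lra.
Qed.

Lemma negdef_gen n (D : 'I_n -> 'I_n -> R) (x : 'I_n -> R) :
  (forall i j, D i j = D j i) ->
  (forall i, D i i + \big[Rplus/0]_(j | j != i) Rabs (D i j) < 0) ->
  (exists i, x i <> 0) ->
  \big[Rplus/0]_(i : 'I_n) \big[Rplus/0]_(j : 'I_n) (x i * D i j * x j) < 0.
Proof.
move=> Hs Hd [i0 Hi0].
pose U i j := if i == j then D i i * (x i * x i) else Rabs (D i j) * (x i * x i) / 2.
pose V i j := if i == j then 0 else Rabs (D i j) * (x j * x j) / 2.
pose W i j := if i == j then 0 else Rabs (D i j) * (x i * x i) / 2.
have H1 : \big[Rplus/0]_(i : 'I_n) \big[Rplus/0]_(j : 'I_n) (x i * D i j * x j)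
   <= \big[Rplus/0]_(i : 'I_n) \big[Rplus/0]_(j : 'I_n) (U i j + V i j).
  apply: sum_le => i _. apply: sum_le => j _. rewrite /U /V.
  case: eqP => [->|Hij]; first lra.
  have A : x i * D i j * x j <= Rabs (D i j) * (Rabs (x i) * Rabs (x j)).
    have := Rle_abs (x i * D i j * x j). rewrite !Rabs_mult. lra.
  have B : 2 * (Rabs (x i) * Rabs (x j)) <= x i * x i + x j * x j.
    have := Rsqr_abs (x i). have := Rsqr_abs (x j). rewrite /Rsqr.
    have := pow2_ge_0 (Rabs (x i) - Rabs (x j)). nra.
  have := Rabs_pos (D i j). nra.
have H2 : \big[Rplus/0]_(i : 'I_n) \big[Rplus/0]_(j : 'I_n) V i j
        = \big[Rplus/0]_(i : 'I_n) \big[Rplus/0]_(j : 'I_n) W i j.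
  rewrite exchange_big /=. apply: eq_bigr => i _. apply: eq_bigr => j _.
  rewrite /V /W eq_sym Hs. done.
have H3 : forall i, \big[Rplus/0]_(j : 'I_n) (U i j + W i j)
    = (D i i + \big[Rplus/0]_(j | j != i) Rabs (D i j)) * (x i * x i).
  move=> i. rewrite (bigD1 i) //= /U /W eqxx.
  have -> : \big[Rplus/0]_(j | true && (j != i))
      ((if i == j then D i i * (x i * x i) else Rabs (D i j) * (x i * x i) / 2) +
       (if i == j then 0 else Rabs (D i j) * (x i * x i) / 2))
    = \big[Rplus/0]_(j | j != i) (Rabs (D i j) * (x i * x i)).
    apply: eq_big => // j. rewrite eq_sym => /negbTE ->. field.
  rewrite Rmult_plus_distr_r. congr (_ + _); first lra.
  elim/big_rec2: _ => [|j a b _ ->]; lra.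
have H4 : \big[Rplus/0]_(i : 'I_n) \big[Rplus/0]_(j : 'I_n) (U i j + V i j)
   = \big[Rplus/0]_(i : 'I_n) \big[Rplus/0]_(j : 'I_n) (U i j + W i j).
  rewrite (eq_bigr (fun i => \big[Rplus/0]_(j : 'I_n) U i j + \big[Rplus/0]_(j : 'I_n) V i j));
    last by move=> i _; rewrite big_split.
  rewrite big_split H2 -big_split. apply: eq_bigr => i _. by rewrite big_split.
have H5 : \big[Rplus/0]_(i : 'I_n) \big[Rplus/0]_(j : 'I_n) (U i j + W i j) < 0.
  rewrite (eq_bigr _ (fun i _ => H3 i)).
  apply: (sum_neg _ _ _ i0) => //.
  - move=> i _. have := Hd i. have := pow2_ge_0 (x i). simpl. nra.
  - have := Hd i0. have : 0 < x i0 * x i0 by nra. nra.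
lra.
Qed.

Lemma face_row n (x : 'I_3 -> R) (c : 'I_3 -> 'I_n) a i : (forall m, 1 < x m) -> c a = i ->
  \big[Rplus/0]_(b | c b == i) Mm x a b + \big[Rplus/0]_(b | c b != i) Rabs (Mm x a b) < 0.
Proof.
move=> Hx. have Hd := Mm_dom x a Hx. rewrite sum_ne in Hd.
move: a Hd; apply: ord3P => Hd Ha; do 3 rewrite ?ordS0 ?ordS1 ?ordS2 in Hd;
  rewrite !sum3c Ha eqxx /=;
  have := Rle_abs (Mm x o0 o0); have := Rle_abs (Mm x o0 o1); have := Rle_abs (Mm x o0 o2);
  have := Rle_abs (Mm x o1 o0); have := Rle_abs (Mm x o1 o1); have := Rle_abs (Mm x o1 o2);
  have := Rle_abs (Mm x o2 o0); have := Rle_abs (Mm x o2 o1); have := Rle_abs (Mm x o2 o2);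
  case: (c o0 == i); case: (c o1 == i); case: (c o2 == i) => /=; lra.
Qed.

Lemma xs_gt1 n (T : triangulation n) (l0 : edge T -> R) w f m : inW l0 w -> 1 < xs l0 w f m.
Proof. move=> Hw. have := Eed_gt1 _ _ l0 w (side f m) Hw. rewrite /xs /X. nra. Qed.

Lemma Dm_row n (T : triangulation n) (l0 : edge T -> R) w i : inW l0 w ->
  Dm l0 w i i + \big[Rplus/0]_(j | j != i) Rabs (Dm l0 w i j) < 0.
Proof.
move=> Hw.
set M := fun f a b => Mm (xs l0 w f) a b.
have HA : \big[Rplus/0]_(j | j != i) Rabs (Dm l0 w i j) <=
   \big[Rplus/0]_(f : face T) \big[Rplus/0]_(a | corner f a == i)
       \big[Rplus/0]_(b | corner f b != i) Rabs (M f a b).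
  apply: (Rle_trans _ (\big[Rplus/0]_(j | j != i) \big[Rplus/0]_(f : face T)
     \big[Rplus/0]_(a | corner f a == i) \big[Rplus/0]_(b | corner f b == j) Rabs (M f a b))).
    apply: sum_le => j _. rewrite /Dm.
    apply: (Rle_trans _ _ _ (sum_abs_le _ _ _ _)). apply: sum_le => f _.
    apply: (Rle_trans _ _ _ (sum_abs_le _ _ _ _)). apply: sum_le => a _.
    exact: sum_abs_le.
  right. rewrite exchange_big. apply: eq_bigr => f _.
  rewrite exchange_big. apply: eq_bigr => a _.
  rewrite [RHS](partition_big (corner f) (fun j => j != i)) //.
  apply: eq_bigr => j Hj. apply: eq_bigl => b.
  case: eqP => [->|_] /=; [by rewrite Hj | by rewrite andbF].
have [f0 [a0 H0]] := vertex_used T i.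
have HB : Dm l0 w i i + \big[Rplus/0]_(f : face T) \big[Rplus/0]_(a | corner f a == i)
       \big[Rplus/0]_(b | corner f b != i) Rabs (M f a b) < 0.
  rewrite /Dm -big_split /=.
  apply: (sum_neg _ _ _ f0) => //.
  - move=> ff _. rewrite -big_split /=. apply: sum_nonpos => a /eqP Ha.
    apply: Rlt_le. apply: face_row => //. move=> m; exact: xs_gt1.
  - rewrite -big_split /=. apply: (sum_neg _ _ _ a0).
    + move=> a /eqP Ha. apply: Rlt_le. apply: face_row => //. move=> m; exact: xs_gt1.
    + by rewrite H0.
    + apply: face_row => //. move=> m; exact: xs_gt1.
lra.
Qed.

Lemma dd_from (a s : R) : a + s < 0 -> 0 <= s -> Rabs a > s.
Proof. move=> H1 H2. rewrite Rabs_left; lra. Qed.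

Lemma Dm_sym n (T : triangulation n) (l0 : edge T -> R) w i j : inW l0 w ->
  Dm l0 w i j = Dm l0 w j i.
Proof.
move=> Hw. rewrite /Dm. apply: eq_bigr => f _.
rewrite exchange_big. apply: eq_bigr => a _. apply: eq_bigr => b _.
apply: Mm_sym => m. exact: xs_gt1.
Qed.

Theorem lemma3p1 (n : nat) (T : triangulation n) (l0 : edge T -> R)
  (Hl0 : forall e, 0 < l0 e) (w : 'I_n -> R) (Hw : inW l0 w) :
  (* the partial derivatives exist *)
  (forall i j : 'I_n, ex_derive (fun t => Bfun l0 (upd w j t) i) (w j)) /\
  (* symmetric *)
  (forall i j : 'I_n, jacB l0 w i j = jacB l0 w j i) /\
  (* strictly diagonally dominant *)
  (forall i : 'I_n,
     Rabs (jacB l0 w i i) > \big[Rplus/0]_(j : 'I_n | j != i) Rabs (jacB l0 w i j)) /\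
  (* negative definite *)
  (forall x : 'I_n -> R, (exists i, x i <> 0) ->
     \big[Rplus/0]_(i : 'I_n) \big[Rplus/0]_(j : 'I_n) (x i * jacB l0 w i j * x j) < 0).
Proof.
have HD : forall i j, jacB l0 w i j = Dm l0 w i j.
  move=> i j. apply: is_derive_unique. exact: B_derive.
split; [|split; [|split]].
- move=> i j. exists (Dm l0 w i j). exact: B_derive.
- move=> i j. rewrite !HD. exact: Dm_sym.
- move=> i. have H := Dm_row _ _ l0 w i Hw.
  rewrite HD (eq_bigr (fun j => Rabs (Dm l0 w i j))); last by move=> j _; rewrite HD.
  have : 0 <= \big[Rplus/0]_(j | j != i) Rabs (Dm l0 w i j) by apply: sum_nonneg => j _; exact: Rabs_pos.
  move=> H0. exact: (dd_from _ _ H H0).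
- move=> x Hx.
  rewrite (eq_bigr (fun i => \big[Rplus/0]_(j : 'I_n) (x i * Dm l0 w i j * x j)));
    last by move=> i _; apply: eq_bigr => j _; rewrite HD.
  apply: negdef_gen => //.
  + move=> i j. exact: Dm_sym.
  + move=> i. exact: Dm_row.
Qed.
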